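(* Let $X=\{v_1,\dots,v_n\}$ be a finite set, let $w:X\to\mathbb{R}^+$ be a weight function normalized so that $\min_{v\in X}w(v)=1$, and put $w_{\max}=\max_{v\in X}w(v)$. Let $g:2^X\to\mathbb{R}^+$ be monotone nondecreasing with $g(\emptyset)=0$. Consider the minimum general cover problem: minimize $w(C)=\sum_{x\in C}w(x)$ over $C\subseteq X$ subject to $g(C)=g(X)$. Let $C^*$ be an optimal solution, $opt=w(C^* )$, and \[\delta=\min\{g(C\cup\{v\})-g(C)\;:\; C\subset X,\ v\in X\setminus C,\ g(C\cup\{v\})>g(C)\}.\] Suppose that (i) for every $C\subset X$ with $g(C)<g(X)$ there is $v\in X\setminus C$ with $g(C\cup\{v\})-g(C)>0$; and (ii) there is a constant $p$ such that for every $C\subset X$ the elements of $C^*\setminus C$ can be ordered as $v_1,\dots,v_t,v_{t+1},\dots,v_{\hat t}$, where, writing $C^*_0=\emptyset$ and $C^*_i=\{v_1,\dots,v_i\}$, $t$ is the smallest index with $g(C^*_t\cup C)=g(X)$, and for all $i=1,\dots,t$, \[ g(C^*_{i-1}\cup C\cup\{v_i\})-g(C^*_{i-1}\cup C)\le g(C\cup\{v_i\})-g(C)+p.\] Then the greedy algorithm — which starts with $C=\emptyset$ and, while $g(C)<g(X)$, adds to $C$ an element $b\in\arg\max_{v\in X\setminus C}\frac{g(C\cup\{v\})-g(C)}{w(v)}$ — outputs a feasible set $C$ with \[ w(C)\le \left((p+1)\frac{w_{\max}}{\delta}+\ln\frac{g(X)-p\cdot opt}{opt}\right)opt,\] where the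 term $\ln\frac{g(X)-p\cdot opt}{opt}$ is interpreted as $0$ if $g(X)-(p+1)\cdot opt\le 0$.
   Context: $\mathbb{R}^+$ denotes the positive reals. The normalization that the cheapest element has weight $1$ is a standing convention of the paper (so $w_{\max}$ is the ratio of the largest to the smallest weight). ''Approximation ratio'' means the ratio of the weight of the returned solution to $opt$. *)

(* Defs.v *)
From HB Require Import structures.
From mathcomp Require Import all_boot all_order all_algebra.
From mathcomp Require Import reals exp.
Set Implicit Arguments. Unset Strict Implicit. Unset Printing Implicit Defensive.
Import Order.TTheory GRing.Theory Num.Theory.
Local Open Scope ring_scope.

(* The ground set X is the full set [set: T] of a finite type T. *)

Definition weight (R : numDomainType) (T : finType) (w : T -> R) (C : {set T}) : R :=
  \sum_(x in C) w x.

Definition gain (R : numDomainType) (T : finType) (g : {set T} -> R)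
  (C : {set T}) (v : T) : R := g (v |: C) - g C.

(* s is a complete execution of the greedy algorithm (with some tie-breaking):
   s lists the elements added, in order. *)
Definition greedy_run (R : numDomainType) (T : finType) (g : {set T} -> R)
  (w : T -> R) (s : seq T) : Prop :=
  (forall (s1 s2 : seq T) (b : T), s = s1 ++ b :: s2 ->
     let C := [set x in s1] in
     [/\ g C < g setT, b \notin C &
         forall v, v \notin C -> gain g C v / w v <= gain g C b / w b])
  /\ g [set x in s] = g setT.

Definition ln_term (R : realType) (gX p opt : R) : R :=
  if gX - (p + 1) * opt <= 0 then 0 else ln ((gX - p * opt) / opt).

(* Main.v *)
Require Import Defs.
From HB Require Import structures.
From mathcomp Require Import all_boot all_order all_algebra.
From mathcomp Require Import reals exp.
From mathcomp Require Import ring lra zify.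
Import Order.TTheory GRing.Theory Num.Theory.
Set Implicit Arguments. Unset Strict Implicit.
Local Open Scope ring_scope.


Lemma ln_le_sub1 (R : realType) (x : R) : 0 < x -> ln x <= x - 1.
Proof.
move=> x0; have := @le_ln1Dx R (x - 1).
have -> : 1 + (x - 1) = x by ring.
by apply; lra.
Qed.

Definition Ff (R : realType) (K P p opt r : R) : R :=
  if r <= P then K * r else K * P + opt * ln ((r - p * opt) / opt).

Arguments Ff {R}.

Lemma step_ok (R : realType) (K p opt delta wmax r r' G wb : R) :
  0 < opt -> 0 <= p -> 0 < delta -> K = wmax / delta ->
  0 <= r' -> r' = r - G -> delta <= G -> 0 < wb -> wb <= wmax ->
  r <= (G / wb + p) * opt ->
  wb + Ff K ((p + 1) * opt) p opt r' <= Ff K ((p + 1) * opt) p opt r.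
Proof.
move=> opt0 p0 d0 HK r'0 Hr' dG wb0 wbm Hkey.
have G0 : 0 < G by lra.
have H1 : wb * (r - p * opt) <= G * opt.
  have e : (G / wb + p) * opt = (G * opt) / wb + p * opt.
    by rewrite mulrDl mulrAC.
  have : r - p * opt <= (G * opt) / wb.
    by rewrite e in Hkey; lra.
  by rewrite ler_pdivlMr // mulrC.
have H2 : wb <= K * G.
  have q : 1 <= G / delta by rewrite ler_pdivlMr // mul1r.
  rewrite HK mulrAC -mulrA; set q' := G / delta in q *; nra.
rewrite /Ff.
set P := (p + 1) * opt.
have [rP|rP] := lerP r P.
  have -> : r' <= P by lra.
  rewrite Hr'; nra.
set u := r - p * opt.
have uopt : opt < u by rewrite /u; rewrite /P in rP; lra.
have u0 : 0 < u by lra.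
have [r'P|r'P] := lerP r' P.
  have Hsplit : wb = wb * (u - opt) / G + wb * (P - r') / G.
    rewrite -mulrDl -mulrDr.
    have -> : u - opt + (P - r') = G by rewrite /u /P Hr'; ring.
    by rewrite mulfK // gt_eqF.
  have A1 : wb * (u - opt) / G <= opt * (u - opt) / u.
    rewrite ler_pdivrMr // mulrAC ler_pdivlMr //.
    have h : 0 <= u - opt by lra.
    have := ler_wpM2r h H1.
    have -> : wb * u * (u - opt) = wb * (u - opt) * u by ring.
    have -> : G * opt * (u - opt) = opt * (u - opt) * G by ring.
    done.
  have A2 : opt * (u - opt) / u <= opt * ln (u / opt).
    rewrite -mulrA ler_wpM2l ?(ltW opt0) //.
    have := @ln_le_sub1 _ _ (divr_gt0 opt0 u0).
    rewrite -{1}(invf_div opt u) lnV; last by rewrite posrE divr_gt0.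
    have -> : (u - opt) / u = 1 - opt / u by rewrite mulrBl divff // gt_eqF.
    lra.
  have A3 : wb * (P - r') / G <= K * (P - r').
    have hP : 0 <= P - r' by lra.
    rewrite mulrAC ler_wpM2r //.
    by rewrite ler_pdivrMr // mulrC.
  rewrite -/u; lra.
set u' := r' - p * opt.
have u'opt : opt < u' by rewrite /u' /P in r'P *; lra.
have u'E : u' = u - G by rewrite /u' /u Hr'; ring.
have u'0 : 0 < u' by lra.
have Hl : ln (u' / opt) = ln (u / opt) + ln (u' / u).
  rewrite -lnM ?posrE ?divr_gt0 //; congr ln.
  by field; rewrite !gt_eqF.
have Hl2 : ln (u' / u) <= u' / u - 1 by apply: ln_le_sub1; rewrite divr_gt0.
have Hl3 : u' / u - 1 = - (G / u).
  rewrite u'E mulrBl divff ?gt_eqF //; ring.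
have Hw : wb <= opt * (G / u).
  by rewrite mulrA ler_pdivlMr // (mulrC opt).
rewrite -/u' -/u Hl; nra.
Qed.

Lemma set_rcons (T : finType) (s : seq T) b :
  [set x in rcons s b] = b |: [set x in s].
Proof. by apply/setP => x; rewrite !inE mem_rcons in_cons. Qed.

Lemma set_nil (T : finType) : [set x in [::]] = set0 :> {set T}.
Proof. by apply/setP => x; rewrite !inE. Qed.

Lemma seq_max (R : realType) (T : eqType) (f : T -> R) (l : seq T) :
  l != [::] -> exists2 b, b \in l & forall v, v \in l -> f v <= f b.
Proof.
elim: l => [//|x l IH] _.
case: l IH => [|y l] IH.
  by exists x; rewrite ?inE // => v; rewrite inE => /eqP ->.
have [b bl Hb] := IH isT.
have [le|lt] := lerP (f x) (f b).
  exists b; first by rewrite in_cons bl orbT.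
  by move=> v; rewrite in_cons => /orP [/eqP ->|/Hb].
exists x; first by rewrite in_cons eqxx.
move=> v; rewrite in_cons => /orP [/eqP ->//|/Hb H].
by apply: (le_trans H); apply: ltW.
Qed.

Lemma key_lemma (R : realType) (T : finType) (w : T -> R) (g : {set T} -> R)
  (p : R) (Cstar C : {set T}) (b : T)
  (Hw1 : forall v, 1 <= w v)
  (Hmono : forall A B : {set T}, A \subset B -> g A <= g B)
  (p0 : 0 <= p)
  (HiiC : exists (s : seq T) (t : nat),
      [/\ perm_eq s (enum (Cstar :\: C)),
          (t <= size s)%N,
          g ([set x in take t s] :|: C) = g setT,
          (forall j, (j < t)%N -> g ([set x in take j s] :|: C) != g setT) &
          (forall (i : nat) (v : T), (1 <= i <= t)%N -> v = nth v s i.-1 ->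
             g (v |: ([set x in take i.-1 s] :|: C)) - g ([set x in take i.-1 s] :|: C)
               <= g (v |: C) - g C + p)])
  (Hb : b \notin C)
  (Hmax : forall v, v \notin C -> gain g C v / w v <= gain g C b / w b) :
  g setT - g C <= (gain g C b / w b + p) * weight w Cstar.
Proof.
have wpos v : 0 < w v by apply: (lt_le_trans _ (Hw1 v)).
set rho := gain g C b / w b.
have rho0 : 0 <= rho.
  rewrite /rho divr_ge0 ?(ltW (wpos b)) // /gain subr_ge0; apply: Hmono.
  exact: subsetUr.
have [s [t [Hperm Ht Hfin _ Hineq]]] := HiiC.
have Hind : forall i, (i <= t)%N ->
    g ([set x in take i s] :|: C) - g C <= \sum_(x <- take i s) (rho * w x + p).
  elim => [|i IH] Hi.
    by rewrite take0 big_nil set_nil set0U subrr.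
  have his : (i < size s)%N by apply: leq_trans Ht.
  rewrite (take_nth b his) set_rcons big_rcons /=.
  set v := nth b s i.
  have H1 := Hineq i.+1 v Hi (set_nth_default v b his).
  rewrite /= in H1.
  have vC : v \notin C.
    have : v \in s by apply: mem_nth.
    by rewrite (perm_mem Hperm) mem_enum inE => /andP [].
  have H2 : gain g C v <= rho * w v.
    by rewrite -ler_pdivrMr //; apply: Hmax.
  have H3 := IH (ltnW Hi).
  rewrite -setUA; rewrite /gain in H2; lra.
have := Hind t (leqnn t); rewrite Hfin => H.
apply: (le_trans H).
have HS : \sum_(x <- take t s) (rho * w x + p) <=
          \sum_(x <- take t s) ((rho + p) * w x).
  apply: ler_sum => x _.
  have := Hw1 x; nra.
apply: (le_trans HS); rewrite -mulr_sumr ler_wpM2l //; first lra.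
have -> : weight w Cstar = \sum_(x in Cstar :&: C) w x + \sum_(x in Cstar :\: C) w x.
  by rewrite /weight (big_setID (A:=Cstar) C).
have : \sum_(x <- take t s) w x <= \sum_(x in Cstar :\: C) w x.
  rewrite -big_enum -(perm_big _ Hperm) -{2}(cat_take_drop t s) big_cat /=.
  rewrite lerDl; apply: sumr_ge0 => x _; exact: ltW.
have : 0 <= \sum_(x in Cstar :&: C) w x by apply: sumr_ge0 => x _; exact: ltW.
lra.
Qed.

Definition gprefix (R : numDomainType) (T : finType) (g : {set T} -> R)
  (w : T -> R) (s : seq T) : Prop :=
  forall (s1 s2 : seq T) (b : T), s = s1 ++ b :: s2 ->
     let C := [set x in s1] in
     [/\ g C < g setT, b \notin C &
         forall v, v \notin C -> gain g C v / w v <= gain g C b / w b].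

Lemma gprefix_nil (R : numDomainType) (T : finType) (g : {set T} -> R) (w : T -> R) :
  gprefix g w [::].
Proof. by move=> [|x s1] s2 b. Qed.

Lemma gprefix_rcons (R : numDomainType) (T : finType) (g : {set T} -> R)
  (w : T -> R) s b :
  gprefix g w s ->
  (let C := [set x in s] in
     [/\ g C < g setT, b \notin C &
         forall v, v \notin C -> gain g C v / w v <= gain g C b / w b]) ->
  gprefix g w (rcons s b).
Proof.
move=> Hs Hb s1 s2 b'.
case/lastP: s2 => [|s2 c].
  by rewrite cats1 => /rcons_inj [<- <-].
rewrite -rcons_cons -rcons_cat => /rcons_inj [E _]; exact: Hs E.
Qed.

Lemma gprefix_uniq (R : numDomainType) (T : finType) (g : {set T} -> R)
  (w : T -> R) s : gprefix g w s -> uniq s.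
Proof.
elim/last_ind: s => [//|s b IH] H.
rewrite rcons_uniq; apply/andP; split.
  have [_ + _] := H s [::] b (esym (cats1 s b)).
  by rewrite inE.
apply: IH => s1 s2 b' E; apply: (H s1 (rcons s2 b) b').
by rewrite E rcons_cat rcons_cons.
Qed.

Lemma ne_enum (T : finType) (C : {set T}) v : v \notin C -> enum (~: C) != [::].
Proof.
move=> vC; have : v \in enum (~: C) by rewrite mem_enum inE.
by case: (enum _).
Qed.

Lemma ex_step (R : realType) (T : finType) (w : T -> R) (g : {set T} -> R)
  (Hmono : forall A B : {set T}, A \subset B -> g A <= g B)
  (Hi : forall C : {set T}, g C < g setT -> exists2 v, v \notin C & 0 < gain g C v)
  s1 : gprefix g w s1 -> g [set x in s1] != g setT ->
  exists b, (size s1 < #|T|)%N /\ gprefix g w (rcons s1 b).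
Proof.
move=> Hs1 NE.
have lt : g [set x in s1] < g setT.
  by rewrite lt_neqAle NE; apply: Hmono; exact: subsetT.
have [v vC _] := Hi _ lt.
have [b + Hb] := @seq_max R T (fun v => gain g [set x in s1] v / w v)
     (enum (~: [set x in s1])) (ne_enum vC).
rewrite mem_enum inE => bC.
exists b; split.
  have Hu : uniq (b :: s1).
    by rewrite /= (gprefix_uniq Hs1) andbT; rewrite inE in bC.
  by move/card_uniqP: Hu => /= <-; exact: max_card.
apply: gprefix_rcons => //; split => // u uC.
by apply: Hb; rewrite mem_enum inE.
Qed.

Lemma ex_run (R : realType) (T : finType) (w : T -> R) (g : {set T} -> R)
  (Hmono : forall A B : {set T}, A \subset B -> g A <= g B)
  (Hi : forall C : {set T}, g C < g setT -> exists2 v, v \notin C & 0 < gain g C v) :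
  forall n s1, gprefix g w s1 -> (#|T| - size s1 <= n)%N ->
    exists s2, greedy_run g w (s1 ++ s2).
Proof.
elim => [|n IH] s1 Hs1 Hn;
  (have [E|NE] := eqVneq (g [set x in s1]) (g setT);
    [by exists [::]; rewrite cats0; split => //|]);
  have [b [usz Hs1']] := ex_step Hmono Hi Hs1 NE.
  by rewrite leqn0 subn_eq0 leqNgt usz in Hn.
have Hn' : (#|T| - size (rcons s1 b) <= n)%N by rewrite size_rcons; lia.
have [s2 H] := IH (rcons s1 b) Hs1' Hn'.
by exists (b :: s2); rewrite -cat_rcons.
Qed.

Lemma suffix_bound (R : realType) (T : finType) (w : T -> R) (g : {set T} -> R)
  (K p opt delta wmax : R) (s : seq T)
  (opt0 : 0 < opt) (p0 : 0 <= p) (d0 : 0 < delta) (HK : K = wmax / delta)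
  (wpos : forall v, 0 < w v) (Hwm : forall v, w v <= wmax)
  (Hmono : forall A B : {set T}, A \subset B -> g A <= g B)
  (Hdl : forall (C : {set T}) (v : T), v \notin C -> 0 < gain g C v -> delta <= gain g C v)
  (Hi : forall C : {set T}, g C < g setT -> exists2 v, v \notin C & 0 < gain g C v)
  (Hkey : forall (C : {set T}) b, g C < g setT -> b \notin C ->
     (forall v, v \notin C -> gain g C v / w v <= gain g C b / w b) ->
     g setT - g C <= (gain g C b / w b + p) * opt)
  (Hpre : gprefix g w s) (Hfin : g [set x in s] = g setT) :
  forall s2 s1, s = s1 ++ s2 ->
    \sum_(x <- s2) w x <= Ff K ((p + 1) * opt) p opt (g setT - g [set x in s1]).
Proof.
elim => [|b s2 IH] s1 E.
  rewrite cats0 in E; rewrite big_nil -E Hfin subrr /Ff.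
  have -> : (0 <= (p + 1) * opt) by apply: mulr_ge0; lra.
  by rewrite mulr0.
have [lt bC Hmax] := Hpre s1 s2 b E.
set C := [set x in s1] in lt bC Hmax *.
have E' : s = rcons s1 b ++ s2 by rewrite cat_rcons.
have IH' := IH (rcons s1 b) E'.
rewrite set_rcons -/C in IH'.
rewrite big_cons.
have G0 : 0 < gain g C b.
  have [v vC gv] := Hi _ lt.
  have h1 := Hmax v vC.
  have h2 : 0 < gain g C v / w v by rewrite divr_gt0.
  have h3 : 0 < gain g C b / w b by apply: (lt_le_trans h2).
  have -> : gain g C b = gain g C b / w b * w b by rewrite divfK // gt_eqF.
  by rewrite mulr_gt0.
have St := @step_ok R K p opt delta wmax (g setT - g C) (g setT - g (b |: C))
  (gain g C b) (w b) opt0 p0 d0 HK.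
have r'0 : 0 <= g setT - g (b |: C) by rewrite subr_ge0; apply: Hmono; exact: subsetT.
have Er : g setT - g (b |: C) = g setT - g C - gain g C b by rewrite /gain; ring.
have := St r'0 Er (Hdl C b bC G0) (wpos b) (Hwm b) (Hkey C b lt bC Hmax).
lra.
Qed.

Unset Implicit Arguments.

Theorem theorem1 (R : realType) (T : finType) (w : T -> R) (g : {set T} -> R)
  (wmax delta p : R) (Cstar : {set T})
  (* normalization: min weight is 1 (so all weights are positive) *)
  (Hwmin : (exists v, w v = 1) /\ (forall v, 1 <= w v))
  (* wmax = max weight *)
  (Hwmax : (exists v, w v = wmax) /\ (forall v, w v <= wmax))
  (* g monotone nondecreasing, g(∅) = 0 *)
  (Hmono : forall A B : {set T}, A \subset B -> g A <= g B)
  (Hg0 : g set0 = 0)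
  (* Cstar is an optimal solution of the general cover problem *)
  (Hfeas : g Cstar = g setT)
  (Hopt : forall C : {set T}, g C = g setT -> weight w Cstar <= weight w C)
  (* delta = min of the positive marginal gains *)
  (Hdelta : (exists (C : {set T}) (v : T), v \notin C /\ 0 < gain g C v /\ gain g C v = delta) /\
            (forall (C : {set T}) (v : T), v \notin C -> 0 < gain g C v -> delta <= gain g C v))
  (* condition (i) *)
  (Hi : forall C : {set T}, g C < g setT -> exists2 v, v \notin C & 0 < gain g C v)
  (* condition (ii) with constant p *)
  (Hii : forall C : {set T}, exists (s : seq T) (t : nat),
      [/\ perm_eq s (enum (Cstar :\: C)),
          (t <= size s)%N,
          g ([set x in take t s] :|: C) = g setT,
          (forall j, (j < t)%N -> g ([set x in take j s] :|: C) != g setT) &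
          (forall (i : nat) (v : T), (1 <= i <= t)%N -> v = nth v s i.-1 ->
             g (v |: ([set x in take i.-1 s] :|: C)) - g ([set x in take i.-1 s] :|: C)
               <= g (v |: C) - g C + p)]) :
  (exists s : seq T, greedy_run g w s) /\
  (forall s : seq T, greedy_run g w s ->
     g [set x in s] = g setT /\
     weight w [set x in s] <=
       ((p + 1) * (wmax / delta) +
        ln_term (g setT) p (weight w Cstar)) * weight w Cstar).
Proof.
have [_ Hw1] := Hwmin.
have wpos v : 0 < w v by apply: (lt_le_trans _ (Hw1 v)).
have [_ Hwm] := Hwmax.
split.
  have [s2 H] := @ex_run R T w g Hmono Hi #|T| [::] (gprefix_nil g w) (leq_subr _ _).
  by exists s2.
move=> s [Hpre Hfin]; split => //.
set opt := weight w Cstar.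
have opt_ge0 : 0 <= opt by apply: sumr_ge0 => x _; exact: ltW.
have gX0 : 0 <= g setT by rewrite -Hg0; apply: Hmono; exact: sub0set.
have [gXle|gXpos] := lerP (g setT) 0.
  have gX : g setT = 0 by apply/eqP; rewrite eq_le gXle gX0.
  case: s Hpre Hfin => [|b s'] Hpre Hfin.
    have : opt <= weight w set0 by apply: Hopt; rewrite Hg0 gX.
    rewrite set_nil /weight big_set0 => h.
    have -> : opt = 0 by apply/eqP; rewrite eq_le h opt_ge0.
    by rewrite mulr0.
  have [+ _ _] := Hpre [::] s' b erefl.
  by rewrite set_nil Hg0 gX ltxx.
have opt0 : 0 < opt.
  have : Cstar != set0.
    by apply/eqP => E; rewrite E Hg0 in Hfeas; rewrite -Hfeas ltxx in gXpos.
  case/set0Pn => x xC.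
  rewrite /opt /weight (big_setD1 x xC) /=.
  have : 0 <= \sum_(i in Cstar :\ x) w i by apply: sumr_ge0 => y _; exact: ltW.
  have := wpos x; lra.
have p0 : 0 <= p.
  have [s0 [t [_ Ht Hf _ Hin]]] := Hii set0.
  case: t Ht Hf Hin => [|t] Ht Hf Hin.
    by rewrite take0 set_nil setU0 Hg0 in Hf; rewrite -Hf ltxx in gXpos.
  case: s0 Ht Hf Hin => [//|x0 s0] Ht Hf Hin.
  have := Hin 1%N x0 isT erefl.
  rewrite /= set_nil setU0; lra.
have d0 : 0 < delta.
  by have [[C [v [_ [h <-]]]] _] := Hdelta.
have Hkey : forall (C : {set T}) b, g C < g setT -> b \notin C ->
     (forall v, v \notin C -> gain g C v / w v <= gain g C b / w b) ->
     g setT - g C <= (gain g C b / w b + p) * opt.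
  move=> C b _ bC Hm; exact: (key_lemma Hw1 Hmono p0 (Hii C) bC Hm).
have Us : uniq s := gprefix_uniq Hpre.
have -> : weight w [set x in s] = \sum_(x <- s) w x.
  by rewrite (big_uniq _ Us); apply: eq_bigl => x; rewrite inE.
have := @suffix_bound R T w g (wmax / delta) p opt delta wmax s opt0 p0 d0 erefl
  wpos Hwm Hmono Hdelta.2 Hi Hkey Hpre Hfin s [::] erefl.
rewrite set_nil Hg0 subr0 => H; apply: (le_trans H).
have K0 : 0 <= wmax / delta.
  apply: divr_ge0; last lra.
  have [[v0 _] _] := Hwmin; apply: le_trans (Hwm v0); exact: ltW.
rewrite /Ff /ln_term.
have [gP|gP] := lerP (g setT) ((p + 1) * opt).
  have -> : g setT - (p + 1) * opt <= 0 by lra.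
  rewrite addr0.
  have -> : (p + 1) * (wmax / delta) * opt = wmax / delta * ((p + 1) * opt) by ring.
  exact: ler_wpM2l.
have -> : (g setT - (p + 1) * opt <= 0) = false by apply/negbTE; rewrite -ltNge; lra.
rewrite mulrDl; lra.
Qed.
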